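(* Let $u$ be a harmonic function on $V_m$, i.e. $H_m u(p)=0$ for every $p\in V_m\setminus V_0$. If, for each $w\in W_m$, $T_w=\{p_{w0},p_{w1},p_{w2}\}$ is a minimal cell in $V_m$, and we extend $u$ to $T_{w1}\cup T_{w2}$ with \[ u(p_{w10}) = \Big(1 - \frac{1}{h^2}\Big) u(p_{w1}) + \frac{1}{h^2} u(p_{w2}),\qquad u(p_{w20}) = u(p_{w10}), \] then $u$ is harmonic in $V_{m+1}$, i.e. $H_{m+1}u(p)=0$ for every $p\in V_{m+1}\setminus V_0$.
   Context: The Hata tree set is the unique compact $K\subset\mathbb{C}$ with $K=F_1(K)\cup F_2(K)$, where $F_1(z)=\alpha\bar z$, $F_2(z)=(1-|\alpha|^2)\bar z+|\alpha|^2$, and $0<|\alpha|,|1-\alpha|<1$. The boundary is $V_0=\{p_0,p_1,p_2\}=\{\alpha,0,1\}$. For a word $w=w_1\cdots w_m\in W_m=\{1,2\}^m$, $F_w=F_{w_1}\circ\cdots\circ F_{w_m}$, $p_{wi}=F_w(p_i)$, and $V_m=\bigcup_{w\in W_m}F_w(V_0)$; note $p_0=p_{12}$ and $|\alpha|^2=p_{10}=p_{21}$. A minimal cell in $V_m$ is $T_w=\{p_{w0},p_{w1},p_{w2}\}$ with $w\in W_m$; as points of $V_{m+1}$, $T_w=\{p_{w12},p_{w11},p_{w22}\}$, and $K_w\cap V_{m+1}=T_{w1}\cup T_{w2}$ with new points $p_{w10}=p_{w21}$ and $p_{w20}$. For a parameter $h>1$, the harmonic structure is given by the Laplacian on $V_0$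 (basis $\chi_\alpha,\chi_0,\chi_1$) \[ D=\begin{pmatrix}-h&h&0\\ h&-(h+1)&1\\ 0&1&-1\end{pmatrix}, \] with resistance renormalization factors $r_1=1/h$, $r_2=1-1/h^2$, and $r_w=r_{w_1}\cdots r_{w_m}$. The discrete Laplacians $H_m$ on $V_m$ are $H_m=\sum_{w\in W_m}\frac{1}{r_w}R_w^tDR_w$ (with $R_w u=u\circ F_w|_{V_0}$); explicitly, at $p=p_{w1}=p_{w'0}$, $H_mf(p)=\frac{1}{r_w}\big(f(p_{w2})-f(p_{w1})+h(f(p_{w0})-f(p_{w1}))\big)+\frac{h}{r_{w'}}\big(f(p_{w'1})-f(p_{w'0})\big)$; at $p=p_{w1}=p_{w'2}$, $H_mf(p)=\frac{1}{r_w}\big(f(p_{w2})-f(p_{w1})+h(f(p_{w0})-f(p_{w1}))\big)+\frac{1}{r_{w'}}\big(f(p_{w'1})-f(p_{w'2})\big)$; at $p=p_{w0}$ in no other cell, $H_mf(p)=\frac{h}{r_w}(f(p_{w1})-f(p_{w0}))$; at $p=p_{w2}$ in no other cell, $H_mf(p)=\frac{1}{r_w}(f(p_{w1})-f(p_{w2}))$. *)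

(* Defs.v *)
From HB Require Import structures.
From mathcomp Require Import all_boot all_order all_algebra.
From mathcomp Require Import complex.
Set Implicit Arguments. Unset Strict Implicit. Unset Printing Implicit Defensive.
Import Order.TTheory GRing.Theory Num.Theory.
Local Open Scope ring_scope.
Local Open Scope complex_scope.

Notation normc := ComplexField.Normc.normc.

Section Hata.
Variable R : rcfType.

Definition asq (a : R[i]) : R := normc a ^+ 2.

Definition F1 (a z : R[i]) : R[i] := a * conjc z.
Definition F2 (a z : R[i]) : R[i] := (1 - asq a)%:C * conjc z + (asq a)%:C.

Definition Fl (a : R[i]) (k : 'I_2) : R[i] -> R[i] :=
  if val k == 0%N then F1 a else F2 a.

(* F_w = F_{w_1} o ... o F_{w_m} for the word w = [:: w_1; ...; w_m] *)
Definition Fw (a : R[i]) (w : seq 'I_2) (z : R[i]) : R[i] :=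
  foldr (fun k z => Fl a k z) z w.

Definition pt (a : R[i]) (i : 'I_3) : R[i] :=
  if val i == 0%N then a else if val i == 1%N then 0 else 1.

Definition pw (a : R[i]) (w : seq 'I_2) (i : 'I_3) : R[i] := Fw a w (pt a i).

Definition inV (a : R[i]) (m : nat) (z : R[i]) : Prop :=
  exists (w : m.-tuple 'I_2) (i : 'I_3), z = pw a w i.
Definition inV0 (a : R[i]) (z : R[i]) : Prop := exists i : 'I_3, z = pt a i.

(* the Laplacian D on V_0, basis (chi_alpha, chi_0, chi_1) *)
Definition Dmat (h : R) : 'M[R]_3 :=
  \matrix_(i < 3, j < 3)
    nth 0 (nth [::] [:: [:: - h; h; 0]; [:: h; - (h + 1); 1]; [:: 0; 1; -1]] i) j.

Definition rl (h : R) (k : 'I_2) : R :=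
  if val k == 0%N then 1 / h else 1 - 1 / h ^+ 2.
Definition rw (h : R) (w : seq 'I_2) : R := \prod_(k <- w) rl h k.

(* H_m f (z) = sum_{w in W_m} (1/r_w) (R_w^t D R_w f)(z),
   where (R_w f)_j = f(p_{wj}) and (R_w^t v)(z) = sum_{i : p_{wi} = z} v_i *)
Definition Hm (a : R[i]) (h : R) (m : nat) (f : R[i] -> R) (z : R[i]) : R :=
  \sum_(w : m.-tuple 'I_2)
     (rw h w)^-1 * \sum_(i < 3) (pw a w i == z)%:R *
        \sum_(j < 3) Dmat h i j * f (pw a w j).

End Hata.

(* Main.v *)
Require Import Defs.
From HB Require Import structures.
From mathcomp Require Import all_boot all_order all_algebra complex ring.
Import Order.TTheory GRing.Theory Num.Theory.
Local Open Scope ring_scope.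
Set Implicit Arguments. Unset Strict Implicit.

Lemma sum_tuple_rcons (R : rcfType) (n : nat) (G : seq 'I_2 -> R) :
  \sum_(t : n.+1.-tuple 'I_2) G t = \sum_(w : n.-tuple 'I_2) \sum_(k < 2) G (rcons w k).
Proof.
rewrite pair_big /=.
rewrite (reindex (fun p : n.-tuple 'I_2 * 'I_2 => rcons_tuple p.1 p.2)) //=.
apply: onW_bij; apply: inj_card_bij.
  move=> [w k] [w' k'] /(congr1 val) /= /rcons_inj [] /val_inj -> ->; done.
by rewrite card_prod !card_tuple card_ord expnS mulnC.
Qed.

Lemma sum3 (R : rcfType) (F : 'I_3 -> R) :
  \sum_(i < 3) F i = F ord0 + F (inord 1) + F (inord 2).
Proof.
rewrite !big_ord_recr big_ord0 /= add0r.
by congr (_ + _ + _); congr F; apply/val_inj; rewrite /= ?inordK.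
Qed.

Lemma sum2 (R : rcfType) (F : 'I_2 -> R) :
  \sum_(i < 2) F i = F ord0 + F (inord 1).
Proof.
rewrite !big_ord_recr big_ord0 /= add0r.
by congr (_ + _); congr F; apply/val_inj; rewrite /= ?inordK.
Qed.
Local Open Scope complex_scope.
Lemma asqE (R : rcfType) (a : R[i]) : a * conjc a = (asq a)%:C.
Proof.
case: a => a1 a2; rewrite /asq /=.
rewrite sqr_sqrtr ?addr_ge0 ?sqr_ge0 //.
simpl.
apply/eqP; rewrite eq_complex /=; apply/andP; split; apply/eqP; ring.
Qed.

Definition Lf (R : rcfType) (a : R[i]) (h : R) (u : R[i] -> R) (w : seq 'I_2) (z : R[i]) : R :=
  (rw h w)^-1 * \sum_(i < 3) (pw a w i == z)%:R * \sum_(j < 3) Dmat h i j * u (pw a w j).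

Lemma Fw_rcons (R : rcfType) (a : R[i]) w k z : Fw a (rcons w k) z = Fw a w (Fl a k z).
Proof. by rewrite /Fw foldr_rcons. Qed.

Lemma rw_rcons (R : rcfType) (h : R) w k : rw h (rcons w k) = rw h w * rl h k.
Proof. by rewrite /rw -cats1 big_cat big_seq1. Qed.

Lemma rw_neq0 (R : rcfType) (h : R) w : 1 < h -> rw h w != 0.
Proof.
move=> h1; rewrite /rw; elim: w => [|k w IH]; first by rewrite big_nil oner_neq0.
rewrite big_cons mulf_neq0 // /rl; case: ifP => _.
  by rewrite div1r invr_neq0 // gt_eqF // (lt_trans ltr01 h1).
have h0 : 0 < h by apply: lt_trans h1.
rewrite subr_eq0 eq_sym div1r invr_eq1 -(expr1n _ 2).
by rewrite  eqrXn2 ?ler01 ?ltW // gt_eqF.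
Qed.

Lemma v1 : nat_of_ord (inord 1 : 'I_3) = 1%N. Proof. by rewrite inordK. Qed.
Lemma v2 : nat_of_ord (inord 2 : 'I_3) = 2%N. Proof. by rewrite inordK. Qed.
Lemma v1' : nat_of_ord (inord 1 : 'I_2) = 1%N. Proof. by rewrite inordK. Qed.

Lemma key (R : rcfType) (a : R[i]) (h : R) (u : R[i] -> R) (w : seq 'I_2) z :
  1 < h ->
  u (pw a (rcons w ord0) ord0)
        = (1 - 1 / h ^+ 2) * u (pw a w (inord 1)) + 1 / h ^+ 2 * u (pw a w (inord 2)) ->
  u (pw a (rcons w (inord 1)) ord0) = u (pw a (rcons w ord0) ord0) ->
  Lf a h u (rcons w ord0) z + Lf a h u (rcons w (inord 1)) z = Lf a h u w z.
Proof.
move=> h1.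
rewrite /Lf /pw !sum3 !Fw_rcons !rw_rcons /Dmat !mxE /pt /Fl /rl /= ?v1 ?v2 ?v1' /=.
have e1 : ((1 - asq a)%:C + (asq a)%:C : R[i]) = 1.
  by apply/eqP; rewrite eq_complex /= subrK addr0 !eqxx.
rewrite /F1 /F2 !conjc0 !conjc1 !mulr0 !mulr1 add0r e1 asqE.
move=> -> ->.
have h0 : h != 0 by rewrite gt_eqF // (lt_trans ltr01 h1).
have hr := rw_neq0 w h1.
have hq : h ^+ 2 - 1 != 0.
  rewrite subr_eq0 -[X in _ == X](expr1n _ 2).
  by rewrite eqrXn2 ?ler01 ?ltW ?(lt_trans ltr01 h1) // gt_eqF.
field.
by rewrite hr h0 hq.
Qed.

Local Close Scope complex_scope.
Theorem mainTheorem1 (R : rcfType) (a : R[i]) (h : R) (m : nat) (u : R[i] -> R) :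
  0 < normc a < 1 -> 0 < normc (1 - a) < 1 -> 1 < h ->
  (forall z, inV a m z -> ~ inV0 a z -> Hm a h m u z = 0) ->
  (forall w : m.-tuple 'I_2,
      u (pw a (rcons w ord0) ord0)
        = (1 - 1 / h ^+ 2) * u (pw a w (inord 1)) + 1 / h ^+ 2 * u (pw a w (inord 2))
   /\ u (pw a (rcons w (inord 1)) ord0) = u (pw a (rcons w ord0) ord0)) ->
  forall z, inV a m.+1 z -> ~ inV0 a z -> Hm a h m.+1 u z = 0.
Proof.
move=> _ _ h1 Hh Hext z _ nz.
have -> : Hm a h m.+1 u z = Hm a h m u z.
  rewrite /Hm (sum_tuple_rcons _ (fun w => Lf a h u w z)).
  apply: eq_bigr => w _; rewrite sum2.
  by case: (Hext w) => e1 e2; apply: key.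
case: (boolP [exists w : m.-tuple 'I_2, [exists i : 'I_3, pw a w i == z]]).
  by case/existsP => w /existsP [i /eqP e]; apply: Hh => //; exists w, i.
rewrite negb_exists => /forallP H.
rewrite /Hm big1 // => w _.
rewrite big1 ?mulr0 // => i _.
move: (H w); rewrite negb_exists => /forallP /(_ i) /negbTE ->.
by rewrite mul0r.
Qed.
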